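(* Let $t\ge0$ be an integer such that $q=4t+5$ is a prime power, let $s=t+1$, let $F_q$ be the field with $q$ elements, $C$ its set of nonzero squares, $V=F_q\times F_q$ and $X=\mathbb{P}(V)$ the projective line (of cardinality $q+1$). For a basis $(u,v)$ of $V$ let $\Gamma^u_v$ be the graph on $X^u=X\setminus\{\langle u\rangle\}$ in which $\langle \alpha u+v\rangle$ and $\langle\beta u+v\rangle$ ($\alpha,\beta\in F_q$) are adjacent iff $\alpha-\beta\in C$. Then for every basis $(u,v)$: 1. $\Gamma^u_v$ has diameter $2$, every vertex has exactly $(q-1)/2=2s$ neighbours, two adjacent vertices have exactly $t=s-1$ common neighbours, and two vertices at distance $2$ have exactly $s$ common neighbours. 2. Let $\widehat\Gamma$ be the graph on $X$ obtained from $\Gamma^u_v$ by adding $\langle u\rangle$ as an isolated vertex. Then the localized graph ${}^{\langle v\rangle}\widehat\Gamma$ has $\langle v\rangle$ isolated and induces $\Gamma^v_u$ on $X\setminus\{\langle v\rangle\}$. 3. (a) For every $\varphi\in GL_2(F_q)$ (acting on $X$ by $\langle w\rangle\mapsto\langle\varphi(w)\rangle$), $\varphi(\Gamma^u_v)=\Gamma^{\varphi(u)}_{\varphi(v)}$. (b) If moreover $\varphi$ stabilizes the line $\langle u\rangle$, then $\Gamma^{\varphi(u)}_{\varphi(v)}=\Gamma^u_v$ if $\det\varphi$ is a square in $F_q$, and otherwise $\Gamma^{\varphi(u)}_{\varphi(v)}$ is the complementary graph of $\Gamma^u_v$ on $X^u$. 4. The group $SL_2(F_q)$ has exactly two orbits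 on the set of graphs $\Gamma^{u'}_{v'}$ ($(u',v')$ ranging over the bases of $V$). The orbit of $\Gamma^u_v$ is the set of graphs obtained by localizing $\widehat\Gamma$ (as in 2) at a point $z\in X$ and deleting the isolated vertex $z$, for $z$ ranging over $X$.
   Context: For a simple graph $\Gamma$ on a finite set $X$, its matrix $\mathcal{E}=(\varepsilon_{i,j})$ has $\varepsilon_{i,j}=-1$ if $i\ne j$ are adjacent, $1$ otherwise. Two graphs on $X$ with matrices $\mathcal{E},\mathcal{E}'$ are associated if there are $\nu_i\in\{\pm1\}$ with $\varepsilon'_{i,j}=\nu_i\nu_j\varepsilon_{i,j}$ for all $i,j$. The localization ${}^z\Gamma$ of $\Gamma$ at $z\in X$ is the unique graph associated to $\Gamma$ in which $z$ is an isolated vertex. The complementary graph has the same vertices, its edges being the non-edges of the original graph. *)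

(* Defs.v *)
From HB Require Import structures.
From mathcomp Require Import all_boot all_order all_algebra.
Set Implicit Arguments. Unset Strict Implicit. Unset Printing Implicit Defensive.
Import GRing.Theory.
Local Open Scope ring_scope.

Section Graphs.
Variable T : finType.

(* A graph is a pair (vertex set, edge set); edges are 2-element sets {x,y}. *)
Definition graph := ({set T} * {set {set T}})%type.

Definition edge (G : graph) (x y : T) : bool := [set x; y] \in G.2.

Definition nbr (G : graph) (x : T) : {set T} := [set y in G.1 | edge G x y].

Definition dist_le (G : graph) (x y : T) (n : nat) : Prop :=
  exists p : seq T, [/\ path (edge G) x p, last x p = y & (size p <= n)%N].

Definition is_dist (G : graph) (x y : T) (n : nat) : Prop :=
  dist_le G x y n /\ forall m, (m < n)%N -> ~ dist_le G x y m.

Definition diameter (G : graph) (d : nat) : Prop :=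
  (forall x y, x \in G.1 -> y \in G.1 -> exists2 n, (n <= d)%N & is_dist G x y n)
  /\ exists x y, [/\ x \in G.1, y \in G.1 & is_dist G x y d].

Definition isolated (G : graph) (z : T) : Prop := forall y, ~~ edge G z y.

Definition induced (G : graph) (W : {set T}) : graph :=
  (W, [set e in G.2 | e \subset W]).

Definition complement (G : graph) : graph :=
  (G.1, [set [set x; y] | x in G.1, y in G.1 & (x != y) && ~~ edge G x y]).

Definition eps (G : graph) (i j : T) : int := if edge G i j then -1 else 1.

Definition associated (G H : graph) : Prop :=
  H.1 = G.1 /\ exists nu : T -> int, (forall i, nu i = 1 \/ nu i = -1) /\
    forall i j, i \in G.1 -> j \in G.1 -> eps H i j = nu i * nu j * eps G i j.

(* localization at z: the graph associated to G (signs nu_i = eps z i,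
   nu_z = 1) in which z is isolated *)
Definition loc (G : graph) (z : T) : graph :=
  (G.1, [set [set i; j] | i in G.1, j in G.1 &
          (i != j) && (eps G z i * eps G z j * eps G i j == -1)]).

End Graphs.

Section Projective.
Variable F : finFieldType.

(* the point <w> of P(V), V = F^2 (row vectors), seen as the set of vectors of the line *)
Definition line (w : 'rV[F]_2) : {set 'rV[F]_2} := [set k *: w | k : F].

Definition projline : {set {set 'rV[F]_2}} :=
  [set line w | w in [set w : 'rV[F]_2 | w != 0]].

Definition nzsq (c : F) : bool := (c != 0) && [exists g : F, c == g ^+ 2].

Definition is_basis (u v : 'rV[F]_2) : bool := row_free (col_mx u v).

Definition gadj (u v : 'rV[F]_2) (x y : {set 'rV[F]_2}) : bool :=
  [exists a : F, exists b : F,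
     [&& x == line (a *: u + v), y == line (b *: u + v) & nzsq (a - b)]].

Definition Gamma (u v : 'rV[F]_2) : graph {set 'rV[F]_2} :=
  (projline :\ line u,
   [set [set x; y] | x in projline :\ line u, y in projline :\ line u &
                     (x != y) && gadj u v x y]).

Definition Ghat (u v : 'rV[F]_2) : graph {set 'rV[F]_2} :=
  (projline, (Gamma u v).2).

Definition actA (A : 'M[F]_2) (S : {set 'rV[F]_2}) : {set 'rV[F]_2} :=
  [set x *m A | x in S].

Definition gimage (A : 'M[F]_2) (G : graph {set 'rV[F]_2}) : graph {set 'rV[F]_2} :=
  (actA A @: G.1, imset (fun e : {set {set 'rV[F]_2}} => actA A @: e) (mem G.2)).

Definition bases : {set 'rV[F]_2 * 'rV[F]_2} :=
  [set p : 'rV[F]_2 * 'rV[F]_2 | is_basis p.1 p.2].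

Definition Gammas : {set graph {set 'rV[F]_2}} := [set Gamma p.1 p.2 | p in bases].

Definition SL2 : {set 'M[F]_2} := [set A : 'M[F]_2 | \det A == 1].

Definition orbitSL (G : graph {set 'rV[F]_2}) : {set graph {set 'rV[F]_2}} :=
  [set gimage A G | A in SL2].

End Projective.

(* Main.v *)
Require Import Defs.
From HB Require Import structures.
From mathcomp Require Import all_boot all_order all_algebra finfield.
From mathcomp Require Import ring zify.
Set Implicit Arguments. Unset Strict Implicit. Unset Printing Implicit Defensive.
Import GRing.Theory.
Local Open Scope ring_scope.


Section NT.
Variable F : finFieldType.
Variable t : nat.
Hypothesis hq : #|F| = (4 * t + 5)%N.

Local Notation Sq := (@nzsq F).
Local Notation m := (2 * t + 2)%N.
Lemma m_gt0 : (0 < m)%N. Proof. by rewrite addn2. Qed.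

Lemma unit_pow (x : F) : x != 0 -> x ^+ (4 * t + 4) = 1.
Proof.
move=> x0; have := expf_card x; rewrite hq.
have -> : (4 * t + 5 = (4 * t + 4).+1)%N by lia.
rewrite exprSr => h; apply: (mulIf x0); by rewrite mul1r.
Qed.

Lemma epow_sq (x : F) : x != 0 -> (x ^+ m) ^+ 2 = 1.
Proof.
move=> x0; rewrite -exprM; have -> : (m * 2 = 4 * t + 4)%N by lia.
exact: unit_pow.
Qed.

Lemma epow_pm (x : F) : x != 0 -> x ^+ m = 1 \/ x ^+ m = -1.
Proof. by move=> /epow_sq/eqP; rewrite sqrf_eq1 => /orP[]/eqP; [left|right]. Qed.

Lemma S_epow (x : F) : Sq x -> x ^+ m = 1.
Proof.
case/andP=> x0 /existsP[g /eqP xg].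
have g0 : g != 0 by apply: contraNneq x0 => g0; rewrite xg g0 expr0n.
rewrite xg -exprM; have -> : (2 * m = 4 * t + 4)%N by lia.
exact: unit_pow.
Qed.

Lemma card_roots_le (n : nat) (c : F) : (0 < n)%N -> (#|[set x : F | x ^+ n == c]| <= n)%N.
Proof.
move=> n0; rewrite cardE -ltnS -(size_XnsubC c n0).
apply: max_poly_roots; last exact: enum_uniq.
  by rewrite -size_poly_eq0 size_XnsubC.
apply/allP => x; rewrite mem_enum inE => /eqP xc.
by rewrite /root !hornerE xc subrr.
Qed.

Lemma card_nz : #|[set x : F | x != 0]| = (4 * t + 4)%N.
Proof. by rewrite cardsE cardC1 hq; lia. Qed.

Lemma card_S_ge : (4 * t + 4 <= 2 * #|[set x : F | Sq x]|)%N.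
Proof.
rewrite -card_nz -sum1_card (partition_big_imset (fun g : F => g ^+ 2)) /=.
have -> : [set g ^+ 2 | g in [set x : F | x != 0]] = [set x | Sq x].
  apply/setP => y; rewrite inE; apply/imsetP/andP.
    case=> g; rewrite inE => g0 ->; split; first by rewrite expf_neq0.
    by apply/existsP; exists g.
  case=> y0 /existsP[g /eqP yg]; exists g => //; rewrite inE.
  by apply: contraNneq y0 => g0; rewrite yg g0 expr0n.
rewrite mulnC -sum_nat_const; apply: leq_sum => y; rewrite inE => /andP[_ /existsP[g /eqP yg]].
rewrite sum1dep_card; apply: leq_trans (_ : #|[set g; - g]| <= 2)%N; last first.
  by rewrite cards2; case: (g != - g).
apply: subset_leq_card; apply/subsetP => h; rewrite !inE => /andP[_ /eqP].
by rewrite yg => /eqP; rewrite eqf_sqr.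
Qed.

Lemma S_iff (x : F) : Sq x = (x ^+ m == 1).
Proof.
have sub : [set x : F | Sq x] \subset [set x : F | x ^+ m == 1].
  by apply/subsetP => y; rewrite !inE => /S_epow ->.
have le1 := @card_roots_le m 1 m_gt0.
have eqc : #|[set x : F | Sq x]| = #|[set x : F | x ^+ m == 1]|.
  apply/eqP; rewrite eqn_leq subset_leq_card //=.
  apply: leq_trans le1 _; rewrite -(leq_pmul2l (ltn0Sn 1)).
  apply: leq_trans card_S_ge; lia.
by have := (subset_cardP eqc sub) x; rewrite !inE.
Qed.

Lemma card_S : #|[set x : F | Sq x]| = m.
Proof.
apply/eqP; rewrite eqn_leq; apply/andP; split.
  have := @card_roots_le m 1 m_gt0.
  by have -> : [set x : F | x ^+ m == 1] = [set x | Sq x] by apply/setP=> x; rewrite !inE S_iff.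
rewrite -(leq_pmul2l (ltn0Sn 1)); apply: leq_trans card_S_ge; lia.
Qed.


Definition chi (x : F) : int := if x == 0 then 0 else if Sq x then 1 else -1.

Lemma S_neq0 (x : F) : Sq x -> x != 0. Proof. by case/andP. Qed.
Lemma chi0 : chi 0 = 0. Proof. by rewrite /chi eqxx. Qed.
Lemma chiS (x : F) : Sq x -> chi x = 1.
Proof. by move=> Sx; rewrite /chi Sx (negPf (S_neq0 Sx)). Qed.
Lemma chiNS (x : F) : x != 0 -> ~~ Sq x -> chi x = -1.
Proof. by move=> x0 Sx; rewrite /chi (negPf Sx) (negPf x0). Qed.

Lemma chiM (x y : F) : chi (x * y) = chi x * chi y.
Proof.
have [->|x0] := eqVneq x 0; first by rewrite mul0r chi0 mul0r.
have [->|y0] := eqVneq y 0; first by rewrite mulr0 chi0 mulr0.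
rewrite /chi (negPf x0) (negPf y0) (negPf (mulf_neq0 x0 y0)) !S_iff exprMn.
case: (epow_pm x0) => ->; case: (epow_pm y0) => ->;
  rewrite ?mulrNN ?mulr1 ?mul1r ?eqxx /= ?mulr1 ?mul1r //; case: (-1 == 1); by rewrite ?mulr1 ?mul1r ?mulrNN.
Qed.

Lemma chi_sq (x : F) : x != 0 -> chi x * chi x = 1.
Proof. by move=> x0; rewrite /chi (negPf x0); case: (Sq x); rewrite ?mulr1 ?mulrNN ?mulr1. Qed.

Lemma S_N1 : Sq (-1 : F).
Proof.
rewrite S_iff; have -> : m = (2 * t.+1)%N by lia.
by rewrite exprM sqrrN expr1n expr1n.
Qed.

Lemma chiN (x : F) : chi (- x) = chi x.
Proof. by rewrite -mulN1r chiM (chiS S_N1) mul1r. Qed.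

Lemma sum_ind (P : pred F) : \sum_x ((P x)%:R : int) = (#|[set x | P x]|)%:R.
Proof.
have h : \sum_(x in [set x | P x]) (1 : int) = 1 *+ #|[set x | P x]| by rewrite sumr_const.
rewrite -h [RHS]big_mkcond /=.
by apply: eq_bigr => x _; rewrite inE; case: (P x).
Qed.

Lemma chiE (x : F) : chi x = ((Sq x)%:R *+ 2 - (x != 0)%:R :> int).
Proof.
rewrite /chi; have [->|x0] := eqVneq x 0; first by rewrite /nzsq eqxx.
by case: (Sq x).
Qed.

Lemma sum_chi : \sum_x chi x = 0.
Proof.
under eq_bigr do rewrite chiE.
rewrite sumrB sumrMnl !sum_ind card_S.
have -> : [set x : F | x != 0] = [set x | x != 0] by [].
rewrite card_nz; lia.
Qed.

Lemma sum_chi_shift (d : F) : \sum_x chi (x - d) = 0.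
Proof.
by have := sum_chi; rewrite (reindex_inj (addIr (- d))).
Qed.

Lemma sum_pick (a : F) (f : F -> int) : \sum_x ((x == a)%:R * f x) = f a.
Proof.
rewrite (bigD1 a) //= eqxx mul1r big1 ?addr0 // => x /negPf ->; by rewrite mul0r.
Qed.

Lemma sum_chi_prod (d : F) : d != 0 -> \sum_c chi c * chi (c - d) = -1.
Proof.
move=> d0; pose h := fun c : F => 1 - d * c^-1.
have hinj : injective h.
  move=> x y /eqP; rewrite /h (inj_eq (addrI 1)) eqr_opp (inj_eq (mulfI d0)).
  by move/eqP/invr_inj.
have e : forall c, chi c * chi (c - d) = chi (h c) - (c == 0)%:R.
  move=> c; have [->|c0] := eqVneq c 0.
    by rewrite chi0 mul0r /h invr0 mulr0 subr0 (chiS (_ : Sq 1)) ?subrr //; rewrite /nzsq oner_eq0; apply/existsP; exists 1; rewrite expr1n.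
  rewrite subr0 -chiM.
  have -> : c * (c - d) = (c * c) * h c by rewrite /h; field.
  by rewrite chiM chiM chi_sq // mul1r.
under eq_bigr do rewrite e.
rewrite sumrB.
have -> : \sum_c chi (h c) = 0 by have := sum_chi; rewrite (reindex_inj hinj).
have -> : \sum_(c : F) ((c == 0)%:R : int) = 1.
  by have := sum_pick 0 (fun _ => 1); under eq_bigr do rewrite mulr1.
by rewrite sub0r.
Qed.


Lemma sum_delta (a : F) : \sum_(c : F) ((c == a)%:R : int) = 1.
Proof. by have := sum_pick a (fun _ => 1); under eq_bigr do rewrite mulr1. Qed.

Lemma sum_one : \sum_(c : F) (1 : int) = (4 * t + 5)%:R.
Proof.
have := sum_ind predT; rewrite /=.
have -> : [set x : F | true] = setT by apply/setP => x; rewrite !inE.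
by rewrite cardsT hq => <-.
Qed.

Lemma count_eq (d : F) : d != 0 ->
  (#|[set c : F | Sq c && Sq (c - d)]|%:R *+ 4 : int) = (4 * t + 2)%:R - chi d *+ 2.
Proof.
move=> d0.
pose b2 := fun x : F => ((x != 0)%:R + chi x : int).
have hb : forall x, (Sq x)%:R *+ 2 = b2 x.
  move=> x; rewrite /b2 /chi; have [->|x0] := eqVneq x 0; first by rewrite /nzsq eqxx.
  by case: (Sq x).
have e1 : forall c, ((Sq c && Sq (c - d))%:R *+ 4 : int) = b2 c * b2 (c - d).
  move=> c; rewrite -!hb; case: (Sq c); case: (Sq (c - d)) => //.
have e2 : forall c, b2 c * b2 (c - d) =
   1 - (c == 0)%:R - (c == d)%:R + (chi (c - d) - (c == 0)%:R * chi (- d))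
     + (chi c - (c == d)%:R * chi d) + chi c * chi (c - d).
  move=> c; rewrite /b2; have [c0|c0] := eqVneq c 0.
    rewrite c0 (eq_sym 0 d) (negPf d0) sub0r oppr_eq0 d0 chi0 /=; ring.
  have [cd|cd] := eqVneq c d.
    rewrite cd subrr ?eqxx chi0 ?(negPf d0) /=; ring.
  have cd0 : c - d != 0 by rewrite subr_eq0.
  rewrite cd0 /=; ring.
rewrite -sum_ind -sumrMnl.
under eq_bigr do rewrite e1 e2.
rewrite !(sumrB, big_split) /= sum_one !sum_delta sum_chi sum_chi_shift.
rewrite -!mulr_suml !sum_delta !mul1r sum_chi_prod // chiN.
have -> : (4 * t + 5)%:R = ((4 * t + 2)%:R + 3 : int) by lia.
ring.
Qed.

Lemma count_S (d : F) : Sq d -> #|[set c : F | Sq c && Sq (c - d)]| = t.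
Proof.
move=> Sd; have := count_eq (S_neq0 Sd); rewrite (chiS Sd) => h.
move: h; set N := #|_| => h; have : (N * 4)%N = (t * 4)%N.
  lia.
lia.
Qed.

Lemma count_NS (d : F) : d != 0 -> ~~ Sq d -> #|[set c : F | Sq c && Sq (c - d)]| = t.+1.
Proof.
move=> d0 Sd; have := count_eq d0; rewrite (chiNS d0 Sd) => h.
move: h; set N := #|_| => h; have : (N * 4)%N = (t.+1 * 4)%N.
  lia.
lia.
Qed.

End NT.


Section MkG.
Variable T : finType.
Implicit Types (V W : {set T}) (r : T -> T -> bool) (x y : T).

Definition mkG (V : {set T}) (r : T -> T -> bool) : graph T :=
  (V, [set [set x; y] | x in V, y in V & (x != y) && r x y]).

Lemma set2_eq (x y x' y' : T) : x' != y' -> [set x; y] = [set x'; y'] ->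
  (x = x' /\ y = y') \/ (x = y' /\ y = x').
Proof.
move=> ne e.
have hx' : x' \in [set x; y] by rewrite e set21.
have hy' : y' \in [set x; y] by rewrite e set22.
move: hx' hy'; rewrite !inE => /orP[]/eqP ex /orP[]/eqP ey; subst.
- by rewrite eqxx in ne.
- by left.
- by right.
- by rewrite eqxx in ne.
Qed.

Lemma edge_mk V r x y : (forall x y, x \in V -> y \in V -> r x y -> r y x) ->
  edge (mkG V r) x y = [&& x \in V, y \in V, x != y & r x y].
Proof.
move=> sym; rewrite /edge /=; apply/imset2P/and4P.
  case=> x' y' hx'; rewrite inE => /andP[hy' /andP[ne rr]] e.
  case: (set2_eq ne e) => [[-> ->]|[-> ->]]; first by split.
  by split => //; [rewrite eq_sym | apply: sym].
by case=> hx hy ne rr; exists x y => //; rewrite inE hy ne rr.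
Qed.

Lemma mk_eq V r r' : (forall x y, x \in V -> y \in V -> x != y -> r x y = r' x y) ->
  mkG V r = mkG V r'.
Proof.
move=> h; congr pair; apply/setP => e; apply/imset2P/imset2P;
  case=> x y hx; rewrite inE => /andP[hy /andP[ne rr]] ->; exists x y => //;
  rewrite inE hy ne /=; by [rewrite -h | rewrite h].
Qed.

Lemma induced_mk V W r : W \subset V -> induced (mkG V r) W = mkG W r.
Proof.
move=> sub; congr pair; apply/setP => e; rewrite inE; apply/andP/imset2P.
  case=> /imset2P[x y hx]; rewrite inE => /andP[hy /andP[ne rr]] -> s.
  exists x y; first by apply: (subsetP s); rewrite set21.
    by rewrite inE ne rr !andbT; apply: (subsetP s); rewrite set22.
  by [].
case=> x y hx; rewrite inE => /andP[hy /andP[ne rr]] ->; split.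
  by apply/imset2P; exists x y; rewrite ?inE ?ne ?rr ?(subsetP sub) ?andbT.
by apply/subsetP => z /set2P[]->.
Qed.

Lemma edge_sym (G : graph T) x y : edge G x y = edge G y x.
Proof. by rewrite /edge setUC. Qed.

Lemma dist_le_small (G : graph T) x y n : (n <= 1)%N -> dist_le G x y n -> x = y \/ edge G x y.
Proof.
move=> n1 [[|z [|w p]]] /= [hp hl hs]; first by left.
  by right; rewrite -hl; case/andP: hp.
by move: (leq_trans hs n1).
Qed.

End MkG.

Section Geo.
Variable F : finFieldType.
Implicit Types (p q w z : 'rV[F]_2).

Definition cross w z : F := w 0 0 * z 0 1 - w 0 1 * z 0 0.

Lemma detc p q : \det (col_mx p q) = cross p q.
Proof.
have r0 : forall j, col_mx p q 0 j = p 0 j.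
  by move=> j; rewrite -(col_mxEu p q 0 j); congr (col_mx p q _ j); apply/val_inj.
have r1 : forall j, col_mx p q 1 j = q 0 j.
  by move=> j; rewrite -(col_mxEd p q 0 j); congr (col_mx p q _ j); apply/val_inj.
move: (col_mx p q) r0 r1 => M r0 r1.
rewrite (expand_det_row _ 0) !big_ord_recl big_ord0 /cofactor.
rewrite !det_mx11 /row' /col' !mxE.
have -> : (lift 0 0 : 'I_2) = 1 by apply/val_inj.
have -> : (lift 1 0 : 'I_2) = 0 by apply/val_inj.
rewrite !r0 !r1 /= expr0 expr1 /cross; ring.
Qed.

Lemma is_basisE p q : is_basis p q = (cross p q != 0).
Proof. by rewrite /is_basis row_free_unit unitmxE unitfE detc. Qed.

Lemma crossE p q a b c d :
  cross (a *: p + b *: q) (c *: p + d *: q) = (a * d - b * c) * cross p q.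
Proof. rewrite /cross !mxE; ring. Qed.

Lemma crossC p q : cross q p = - cross p q.
Proof. rewrite /cross; ring. Qed.

Lemma crossM p q (A : 'M[F]_2) : cross (p *m A) (q *m A) = cross p q * \det A.
Proof. by rewrite -!detc -det_mulmx mul_col_mx. Qed.

Lemma crossZl k p q : cross (k *: p) q = k * cross p q.
Proof. rewrite /cross !mxE; ring. Qed.
Lemma crossZr k p q : cross p (k *: q) = k * cross p q.
Proof. rewrite /cross !mxE; ring. Qed.
Lemma crossDaZ a p q : cross p (a *: p + q) = cross p q.
Proof. rewrite /cross !mxE; ring. Qed.
Lemma cross0r p : cross p 0 = 0.
Proof. rewrite /cross !mxE; ring. Qed.
Lemma crossAB a b p q : cross (a *: p + q) (b *: p + q) = (a - b) * cross p q.
Proof. rewrite /cross !mxE; ring. Qed.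

Lemma vec_decomp p q w : cross p q != 0 ->
  w = (cross w q / cross p q) *: p + (cross p w / cross p q) *: q.
Proof.
move=> c0; apply/rowP => j; rewrite !mxE.
have [j0|j1] : j = 0 \/ j = 1.
  by case: j => [[|[|//]]] h; [left|right]; apply/val_inj.
all: rewrite ?j0 ?j1; move: c0; rewrite /cross => c0 /=.
all: field; exact: c0.
Qed.

Lemma lineP w x : reflect (exists k, x = k *: w) (x \in line w).
Proof. by apply: (iffP imsetP) => [[k _ ->]|[k ->]]; exists k. Qed.

Lemma line_self w : w \in line w.
Proof. by apply/lineP; exists 1; rewrite scale1r. Qed.

Lemma line_scale w k : k != 0 -> line (k *: w) = line w.
Proof.
move=> k0; apply/setP => x; apply/lineP/lineP => [[c ->]|[c ->]].
  by exists (c * k); rewrite scalerA.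
by exists (c / k); rewrite scalerA divfK.
Qed.

Lemma line_cross w z : z \in line w -> cross w z = 0.
Proof. by case/lineP => k ->; rewrite crossZr /cross; ring. Qed.

Lemma line_eq_scale p w : w != 0 -> line p = line w -> exists2 k, k != 0 & w = k *: p.
Proof.
move=> w0 e; have : w \in line p by rewrite e line_self.
case/lineP => k wk; exists k => //; apply: contraNneq w0 => k0; by rewrite wk k0 scale0r.
Qed.

Lemma projlineP x : reflect (exists2 w, w != 0 & x = line w) (x \in projline F).
Proof.
apply: (iffP imsetP) => [[w]|[w]]; rewrite ?inE => w0 ->; by exists w; rewrite ?inE.
Qed.

Lemma line_in_proj w : w != 0 -> line w \in projline F.
Proof. by move=> w0; apply/projlineP; exists w. Qed.

Lemma actA_line (A : 'M[F]_2) w : actA A (line w) = line (w *m A).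
Proof.
apply/setP => x; apply/imsetP/lineP => [[y /lineP[k ->] ->]|[k ->]].
  by exists k; rewrite scalemxAl.
by exists (k *: w); [apply/lineP; exists k | rewrite scalemxAl].
Qed.

Section Basis.
Variables p q : 'rV[F]_2.
Hypothesis hpq : cross p q != 0.

Lemma p_neq0 : p != 0.
Proof. by apply: contraNneq hpq => ->; rewrite crossC cross0r oppr0. Qed.

Lemma P0 a : a *: p + q != 0.
Proof. by apply: contraNneq hpq => e; rewrite -(crossDaZ a) e cross0r. Qed.

Lemma Pu : line p \in projline F.
Proof. exact: line_in_proj p_neq0. Qed.

Lemma P1 a : line (a *: p + q) \in projline F :\ line p.
Proof.
rewrite !inE line_in_proj ?P0 // andbT; apply/eqP => e.
have : a *: p + q \in line p by rewrite -e line_self.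
by move/line_cross; rewrite crossDaZ; apply/eqP.
Qed.

Lemma P3 a b : line (a *: p + q) = line (b *: p + q) -> a = b.
Proof.
move=> e; have : b *: p + q \in line (a *: p + q) by rewrite e line_self.
move/line_cross; rewrite crossAB => /eqP; rewrite mulf_eq0 (negPf hpq) orbF subr_eq0.
by move/eqP.
Qed.

Lemma P2 x : x \in projline F :\ line p -> exists a, x = line (a *: p + q).
Proof.
rewrite !inE => /andP[nx /projlineP[w w0 ex]]; subst x.
set al := cross w q / cross p q; set be := cross p w / cross p q.
have wd := vec_decomp w hpq; rewrite -/al -/be in wd.
have [be0|be0] := eqVneq be 0.
  have al0 : al != 0 by apply: contraNneq w0 => a0; rewrite wd a0 be0 !scale0r addr0.
  have : line w = line p by rewrite wd be0 scale0r addr0 line_scale.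
  by move=> e; rewrite e eqxx in nx.
exists (al / be); rewrite -(line_scale w (invr_neq0 be0)) wd scalerDr !scalerA mulVf //.
by rewrite scale1r mulrC.
Qed.

Lemma gadjE a b : gadj p q (line (a *: p + q)) (line (b *: p + q)) = nzsq (a - b).
Proof.
apply/existsP/idP => [[a' /existsP[b' /and3P[/eqP/P3 <- /eqP/P3 <- h]]] //|h].
by exists a; apply/existsP; exists b; rewrite !eqxx h.
Qed.

End Basis.
End Geo.


Section Main.
Variable F : finFieldType.
Variable t : nat.
Hypothesis hq : #|F| = (4 * t + 5)%N.
Local Notation Sq := (@nzsq F).
Local Notation chi := (@chi F).
Local Notation V p := (projline F :\ line p).
Implicit Types (p q w u v : 'rV[F]_2).

Lemma chi1E (x : F) : (chi x == 1) = Sq x.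
Proof.
rewrite /chi; have [->|x0] := eqVneq x 0; first by rewrite /nzsq eqxx.
by case: (Sq x).
Qed.

Lemma chi_pm (x : F) : x != 0 -> chi x = 1 \/ chi x = -1.
Proof. by move=> x0; case: (boolP (Sq x)) => h; [left; apply: chiS | right; apply: chiNS]. Qed.

Lemma SqN (x : F) : Sq (- x) = Sq x.
Proof. by rewrite -!chi1E (chiN hq). Qed.

Lemma chiV (x : F) : chi x^-1 = chi x.
Proof.
have [->|x0] := eqVneq x 0; first by rewrite invr0.
have h : chi x * chi x^-1 = 1 by rewrite -(chiM hq) mulfV // chiS //; rewrite /nzsq oner_eq0; apply/existsP; exists 1; rewrite expr1n.
by case: (chi_pm x0) => e; rewrite e in h *; [rewrite mul1r in h | rewrite mulN1r in h; rewrite -[chi _]opprK h].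
Qed.

Lemma Sq1 : Sq 1.
Proof. by rewrite /nzsq oner_eq0; apply/existsP; exists 1; rewrite expr1n. Qed.

Lemma Sq0 : Sq 0 = false.
Proof. by rewrite /nzsq eqxx. Qed.


Lemma loc_mk (T : finType) (G : graph T) z :
  loc G z = mkG G.1 (fun i j => eps G z i * eps G z j * eps G i j == -1).
Proof. by []. Qed.

Lemma eps_sym (T : finType) (G : graph T) x y : eps G x y = eps G y x.
Proof. by rewrite /eps edge_sym. Qed.

Lemma eps_sq (T : finType) (G : graph T) x y : eps G x y * eps G x y = 1.
Proof. by rewrite /eps; case: edge. Qed.

Lemma loc_sym (T : finType) (G : graph T) z x y :
  x \in G.1 -> y \in G.1 -> eps G z x * eps G z y * eps G x y == -1 ->
  eps G z y * eps G z x * eps G y x == -1.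
Proof. by move=> _ _; rewrite [eps G z y * _]mulrC (eps_sym G y x). Qed.

Lemma loc_isolated (T : finType) (G : graph T) z : ~~ edge G z z -> isolated (loc G z) z.
Proof.
move=> nz y; rewrite loc_mk edge_mk; last exact: loc_sym.
rewrite -mulrA eps_sq /eps (negPf nz) mul1r.
by rewrite !andbF.
Qed.

Section Basis.
Variables p q : 'rV[F]_2.
Hypothesis hpq : cross p q != 0.

Lemma GammaE : Gamma p q = mkG (V p) (gadj p q).
Proof. by []. Qed.

Lemma edgeG x y : edge (Gamma p q) x y = [&& x \in V p, y \in V p, x != y & gadj p q x y].
Proof.
rewrite GammaE edge_mk // => x' y' /(P2 hpq)[a ->] /(P2 hpq)[b ->].
by rewrite !gadjE // -opprB SqN.
Qed.

Lemma edgeGE a b : edge (Gamma p q) (line (a *: p + q)) (line (b *: p + q)) = Sq (a - b).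
Proof.
rewrite edgeG !P1 //= gadjE //; case h: (Sq (a - b)); rewrite ?andbF ?andbT //.
apply/eqP => /(P3 hpq) e; by rewrite e subrr Sq0 in h.
Qed.

Lemma edge_V x y : edge (Gamma p q) x y -> x \in V p /\ y \in V p.
Proof. by rewrite edgeG => /and4P[]. Qed.

Lemma nbrE a : nbr (Gamma p q) (line (a *: p + q)) =
  [set line (b *: p + q) | b in [set b | Sq (a - b)]].
Proof.
apply/setP => y; rewrite inE; apply/andP/imsetP.
  case=> /(P2 hpq)[b ->]; rewrite edgeGE => h; by exists b; rewrite ?inE.
by case=> b; rewrite inE => h ->; rewrite edgeGE // h P1.
Qed.

Lemma linj : injective (fun b => line (b *: p + q)).
Proof. by move=> a b /(P3 hpq). Qed.

Lemma card_nbr a : #|nbr (Gamma p q) (line (a *: p + q))| = (2 * t + 2)%N.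
Proof.
rewrite nbrE card_imset; last exact: linj.
rewrite -(card_S hq) -(card_imset _ (subrI a)); apply: eq_card => c.
rewrite !inE; apply/idP/imsetP => [h|[b]]; last by rewrite inE => h ->; rewrite subKr.
by exists (a - c); rewrite ?inE ?subKr.
Qed.

Lemma card_common a b : #|nbr (Gamma p q) (line (a *: p + q)) :&: nbr (Gamma p q) (line (b *: p + q))|
  = #|[set c : F | Sq c && Sq (c - (a - b))]|.
Proof.
have -> : nbr (Gamma p q) (line (a *: p + q)) :&: nbr (Gamma p q) (line (b *: p + q)) =
   [set line (c *: p + q) | c in [set c | Sq (a - c) && Sq (b - c)]].
  apply/setP => y; rewrite !nbrE inE; apply/andP/imsetP.
    case=> /imsetP[c1]; rewrite inE => h1 -> /imsetP[c2]; rewrite inE => h2 /(P3 hpq) e.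
    by exists c1; rewrite // inE h1 e h2.
  case=> c; rewrite inE => /andP[h1 h2] ->; split; apply/imsetP; exists c; by rewrite ?inE.
rewrite card_imset; last exact: linj.
rewrite -(card_imset _ (subrI a)); apply: eq_card => c.
rewrite !inE; apply/idP/imsetP => [h|[d]]; last first.
  by rewrite inE => /andP[h1 h2] ->; rewrite subKr h1 /=; have -> : b - (a - d) = d - (a - b) by ring.
exists (a - c); last by rewrite subKr.
by rewrite inE; case/andP: h => -> h; have -> : a - c - (a - b) = b - c by ring.
Qed.


Lemma exists_NS : exists d : F, (d != 0) && ~~ Sq d.
Proof.
case: (boolP [exists d : F, (d != 0) && ~~ Sq d]) => [/existsP//|/existsPn h].
have sub : [set x : F | x != 0] \subset [set x | Sq x].
  apply/subsetP => x; rewrite !inE => x0; move: (h x); rewrite x0 /=; by case: (Sq x).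
have := subset_leq_card sub; rewrite (card_nz hq) (card_S hq); lia.
Qed.

Lemma dist_le0 (T : finType) (G : graph T) (x y : T) : dist_le G x y 0 -> x = y.
Proof. by case=> [[|z s]] [] //. Qed.

Lemma edge_irr x : edge (Gamma p q) x x = false.
Proof. by rewrite edgeG eqxx !andbF. Qed.

Lemma is_dist0 x : is_dist (Gamma p q) x x 0.
Proof. by split; [exists [::] | by []]. Qed.

Lemma is_dist1 x y : edge (Gamma p q) x y -> is_dist (Gamma p q) x y 1.
Proof.
move=> e; split; first by exists [:: y]; rewrite /= e.
case=> // _ /dist_le0 xy; by rewrite xy edge_irr in e.
Qed.

Lemma is_dist2 x y : x \in V p -> y \in V p -> x != y -> ~~ edge (Gamma p q) x y ->
  is_dist (Gamma p q) x y 2.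
Proof.
move=> /(P2 hpq)[a ->] /(P2 hpq)[b ->] ne ne'.
have ab : a - b != 0 by rewrite subr_eq0; apply: contraNneq ne => ->.
rewrite edgeGE in ne'.
have := card_common a b; rewrite (count_NS hq ab ne') => hc.
have : (0 < #|nbr (Gamma p q) (line (a *: p + q)) :&: nbr (Gamma p q) (line (b *: p + q))|)%N.
  by rewrite hc.
case/card_gt0P => z; rewrite !inE => /andP[/andP[_ e1] /andP[_ e2]].
split; first by exists [:: z; line (b *: p + q)]; rewrite /= e1 edge_sym e2.
move=> m hm hd; have m1 : (m <= 1)%N by lia.
case: (dist_le_small m1 hd) => e; first by rewrite e eqxx in ne.
by rewrite edgeGE (negPf ne') in e.
Qed.

Lemma dist2_inv x y : is_dist (Gamma p q) x y 2 -> x != y /\ ~~ edge (Gamma p q) x y.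
Proof.
case=> _ h; split.
  by apply/eqP => e; apply: (h 0%N) => //; exists [::]; rewrite e.
by apply/negP => e; apply: (h 1%N) => //; exists [:: y]; rewrite /= e.
Qed.

Lemma part1 : let G := Gamma p q in
  [/\ diameter G 2,
       (forall x, x \in G.1 ->
          #|nbr G x| = (#|F|.-1)./2 /\ #|nbr G x| = (2 * t.+1)%N),
       (forall x y, x \in G.1 -> y \in G.1 -> edge G x y ->
          #|nbr G x :&: nbr G y| = t) &
       (forall x y, x \in G.1 -> y \in G.1 -> is_dist G x y 2 ->
          #|nbr G x :&: nbr G y| = t.+1)].
Proof.
split.
- split.
    move=> x y hx hy.
    have [->|ne] := eqVneq x y; first by exists 0%N => //; apply: is_dist0.
    case e: (edge (Gamma p q) x y); first by exists 1%N => //; apply: is_dist1.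
    by exists 2%N => //; apply: is_dist2 => //; rewrite e.
  case: exists_NS => d /andP[d0 nd].
  exists (line (0 *: p + q)), (line (d *: p + q)); split; rewrite ?P1 //.
  apply: is_dist2; rewrite ?P1 //.
    by apply/eqP => /(P3 hpq) e; rewrite -e eqxx in d0.
  by rewrite edgeGE sub0r SqN.
- move=> x /(P2 hpq)[a ->]; rewrite card_nbr hq; split; last by lia.
  have -> : (4 * t + 5).-1 = (2 * t + 2).*2 by rewrite -muln2; lia.
  by rewrite half_double.
- move=> x y /(P2 hpq)[a ->] /(P2 hpq)[b ->]; rewrite edgeGE card_common.
  exact: count_S.
- move=> x y /(P2 hpq)[a ->] /(P2 hpq)[b ->] /dist2_inv[ne]; rewrite edgeGE card_common => nS.
  apply: (count_NS hq) => //; rewrite subr_eq0; apply: contraNneq ne => ->.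
  by [].
Qed.


Lemma hqp : cross q p != 0.
Proof. by rewrite crossC oppr_eq0. Qed.

Lemma line_swap al : al != 0 -> line (al *: q + p) = line (al^-1 *: p + q).
Proof.
move=> a0; rewrite -(line_scale (al *: q + p) (invr_neq0 a0)); congr line.
by rewrite scalerDr scalerA mulVf // scale1r addrC.
Qed.

Lemma notVp : line p \in V p = false.
Proof. by rewrite !inE eqxx. Qed.

Lemma edge_swap al be : edge (Gamma p q) (line (al *: q + p)) (line (be *: q + p)) =
   [&& al != 0, be != 0 & Sq (al^-1 - be^-1)].
Proof.
have [->|a0] := eqVneq al 0; first by rewrite scale0r add0r edgeG notVp.
have [->|b0] := eqVneq be 0; first by rewrite scale0r add0r edgeG notVp !andbF.
by rewrite !line_swap // edgeGE.
Qed.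

Lemma edge_q al : edge (Gamma p q) (line q) (line (al *: q + p)) = (al != 0) && Sq al.
Proof.
have [->|a0] := eqVneq al 0; first by rewrite scale0r add0r edgeG notVp !andbF.
have -> : line q = line (0 *: p + q) by rewrite scale0r add0r.
by rewrite line_swap // edgeGE sub0r SqN -!chi1E chiV.
Qed.

Lemma part2 : isolated (loc (Ghat p q) (line q)) (line q) /\
   induced (loc (Ghat p q) (line q)) (projline F :\ line q) = Gamma q p.
Proof.
split.
  apply: loc_isolated; rewrite /Ghat /edge /=; exact: (negbT (edge_irr (line q))).
rewrite loc_mk induced_mk /=; last exact: subD1set.
have -> : Gamma q p = mkG (V q) (gadj q p) by [].
apply: mk_eq => i j /(P2 hqp)[al ->] /(P2 hqp)[be ->] ne.
rewrite gadjE; last exact: hqp.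
have ab : al != be by apply: contraNneq ne => ->.
rewrite /eps.
have E : forall x y, edge (Ghat p q) x y = edge (Gamma p q) x y by [].
rewrite !E !edge_q edge_swap.
have [a0|a0] := eqVneq al 0.
  move: ab; rewrite a0 sub0r SqN eq_sym => b0; rewrite b0 /=; by case: (Sq be).
have [b0|b0] := eqVneq be 0.
  rewrite b0 subr0 /=; by case: (Sq al).
rewrite /= -!chi1E.
have -> : al^-1 - be^-1 = - ((al - be) * al^-1 * be^-1) by field; rewrite a0 b0.
rewrite (chiN hq) !(chiM hq) !chiV.
have d0 : al - be != 0 by rewrite subr_eq0.
by case: (chi_pm a0) => ->; case: (chi_pm b0) => ->; case: (chi_pm d0) => ->.
Qed.


Lemma GammaE2 e : (e \in (Gamma p q).2) =
  [exists a, exists b, Sq (a - b) && (e == [set line (a *: p + q); line (b *: p + q)])].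
Proof.
apply/imset2P/existsP.
  case=> x y hx; rewrite inE => /andP[hy /andP[ne g]] ->.
  case: (P2 hpq hx) => a ex; case: (P2 hpq hy) => b ey; subst x y.
  by exists a; apply/existsP; exists b; rewrite -(gadjE hpq) g eqxx.
case=> a /existsP[b /andP[h /eqP ->]].
exists (line (a *: p + q)) (line (b *: p + q)); rewrite ?P1 // inE P1 // gadjE // h andbT /=.
by apply/eqP => /(P3 hpq) eab; rewrite eab subrr Sq0 in h.
Qed.

Lemma imset_set2 (T1 T2 : finType) (f : T1 -> T2) x y : f @: [set x; y] = [set f x; f y].
Proof. by rewrite imsetU1 imset_set1. Qed.

Lemma lin_mul (A : 'M[F]_2) a : (a *: p + q) *m A = a *: (p *m A) + q *m A.
Proof. by rewrite mulmxDl scalemxAl. Qed.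


Lemma compl_mk : complement (Gamma p q) = mkG (V p) (fun x y => ~~ edge (Gamma p q) x y).
Proof. by []. Qed.

Lemma rebase p' q' : cross p' q' != 0 -> line p' = line p ->
  Gamma p' q' = if Sq (cross p' q' / cross p q) then Gamma p q else complement (Gamma p q).
Proof.
move=> h' e.
have p'0 : p' != 0 by apply: (p_neq0 h').
case: (line_eq_scale p'0 (esym e)) => la la0 ep.
set mu := cross q' q / cross p q; set nu := cross p q' / cross p q.
have eq' : q' = mu *: p + nu *: q := vec_decomp q' hpq.
have cr : cross p' q' = la * nu * cross p q.
  by rewrite ep eq' -[la *: p]addr0 -(scale0r q) crossE mul0r subr0.
have nu0 : nu != 0 by apply: contraNneq h' => n0; rewrite cr n0 mulr0 mul0r.
have -> : cross p' q' / cross p q = la * nu by rewrite cr mulfK.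
have lx : forall al, line (al *: p' + q') = line (((al * la + mu) / nu) *: p + q).
  move=> al; rewrite -(line_scale (al *: p' + q') (invr_neq0 nu0)); congr line.
  apply/rowP => k; rewrite ep eq' !mxE; field; exact: nu0.
have ab' : forall al be, ((al * la + mu) / nu) - ((be * la + mu) / nu) = (al - be) * la * nu^-1.
  by move=> al be; field; exact: nu0.
have -> : Gamma p' q' = mkG (V p') (gadj p' q') by [].
have Ve : V p' = V p by rewrite e.
rewrite Ve.
case: ifP => hs; [rewrite GammaE | rewrite compl_mk]; apply: mk_eq => x y hx hy ne.
  move: hx hy ne; rewrite -Ve => /(P2 h')[al ->] /(P2 h')[be ->] ne.
  have d0 : al - be != 0 by rewrite subr_eq0; apply: contraNneq ne => ->.
  rewrite (gadjE h') !lx (gadjE hpq) ab' -!chi1E !(chiM hq) chiV.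
  move: hs; rewrite -!chi1E (chiM hq).
  by case: (chi_pm la0) => ->; case: (chi_pm nu0) => ->; case: (chi_pm d0) => ->.
move: hx hy ne; rewrite -Ve => /(P2 h')[al ->] /(P2 h')[be ->] ne.
have d0 : al - be != 0 by rewrite subr_eq0; apply: contraNneq ne => ->.
rewrite (gadjE h') !lx edgeGE ab' -!chi1E !(chiM hq) chiV.
move: hs; rewrite -!chi1E (chiM hq).
by case: (chi_pm la0) => ->; case: (chi_pm nu0) => ->; case: (chi_pm d0) => ->.
Qed.

End Basis.

Lemma part3a p q (hpq : cross p q != 0) (A : 'M[F]_2) : A \in unitmx -> gimage A (Gamma p q) = Gamma (p *m A) (q *m A).
Proof.
move=> uA; have dA : \det A != 0 by rewrite -unitfE -unitmxE.
have hA : cross (p *m A) (q *m A) != 0 by rewrite crossM mulf_neq0.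
have act : forall a, actA A (line (a *: p + q)) = line (a *: (p *m A) + q *m A).
  by move=> a; rewrite actA_line lin_mul.
congr pair.
  apply/setP => x; apply/imsetP/idP.
    by case=> y /(P2 hpq)[a ->] ->; rewrite act (P1 hA).
  by case/(P2 hA) => a ->; exists (line (a *: p + q)); rewrite ?(P1 hpq) // act.
apply/setP => e; rewrite (GammaE2 hA); apply/imsetP/existsP.
  case=> e0; rewrite (GammaE2 hpq) => /existsP[a /existsP[b /andP[h /eqP ->]]] ->.
  by exists a; apply/existsP; exists b; rewrite h imset_set2 !act eqxx.
case=> a /existsP[b /andP[h /eqP ->]].
exists [set line (a *: p + q); line (b *: p + q)]; last by rewrite imset_set2 !act.
by rewrite (GammaE2 hpq); apply/existsP; exists a; apply/existsP; exists b; rewrite h eqxx.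
Qed.


Lemma part3b p q (hpq : cross p q != 0) (A : 'M[F]_2) : A \in unitmx -> actA A (line p) = line p ->
  Gamma (p *m A) (q *m A) =
    if [exists g : F, \det A == g ^+ 2] then Gamma p q else complement (Gamma p q).
Proof.
move=> uA e; have dA : \det A != 0 by rewrite -unitfE -unitmxE.
have hA : cross (p *m A) (q *m A) != 0 by rewrite crossM mulf_neq0.
rewrite (rebase hpq hA); last by rewrite -actA_line.
by rewrite crossM mulrC mulKf // /nzsq dA.
Qed.

Definition Orb (b : bool) := [set Gamma r.1 r.2 | r in
   [set r : 'rV[F]_2 * 'rV[F]_2 | (cross r.1 r.2 != 0) && (Sq (cross r.1 r.2) == b)]].

Lemma Sq_div (x y : F) : x != 0 -> y != 0 -> Sq (x / y) = (Sq x == Sq y).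
Proof.
move=> x0 y0; rewrite -!chi1E (chiM hq) chiV.
by case: (chi_pm x0) => ->; case: (chi_pm y0) => ->.
Qed.

Lemma unit_of_cross p q : cross p q != 0 -> col_mx p q \in unitmx.
Proof. by move=> h; rewrite unitmxE unitfE detc. Qed.

Lemma orbit_eq p q : cross p q != 0 -> orbitSL (Gamma p q) = Orb (Sq (cross p q)).
Proof.
move=> hpq; apply/setP => H; apply/imsetP/imsetP.
  case=> A; rewrite inE => /eqP dA ->.
  have uA : A \in unitmx by rewrite unitmxE dA unitr1.
  exists (p *m A, q *m A); last exact: part3a.
  by rewrite inE /= crossM dA mulr1 hpq eqxx.
case=> [[p' q']]; rewrite inE /= => /andP[h' /eqP hs] ->.
set c := cross p q / cross p' q'.
have c0 : c != 0 by rewrite mulf_neq0 ?invr_neq0.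
set A := invmx (col_mx p q) *m col_mx p' (c *: q').
have uM := unit_of_cross hpq.
have MA : col_mx p q *m A = col_mx p' (c *: q') by rewrite mulKVmx.
have [pA qA] : p *m A = p' /\ q *m A = c *: q' by apply: eq_col_mx; rewrite -mul_col_mx.
have dA : \det A = 1.
  have := congr1 determinant MA; rewrite det_mulmx !detc crossZr /c mulfVK //.
  by move/eqP; rewrite -{2}[cross p q]mulr1 (inj_eq (mulfI hpq)) => /eqP.
have uA : A \in unitmx by rewrite unitmxE dA unitr1.
exists A; first by rewrite inE dA.
rewrite part3a // pA qA.
have h'' : cross p' (c *: q') != 0 by rewrite crossZr mulf_neq0.
rewrite (rebase h' h'') // crossZr mulfK // Sq_div ?hs ?eqxx //.
Qed.

Lemma Gamma_ne_compl p q : cross p q != 0 -> Gamma p q <> complement (Gamma p q).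
Proof.
move=> hpq e; have := edgeGE hpq 1 0; rewrite subr0 Sq1.
rewrite {1}e compl_mk edge_mk.
  by rewrite (edgeGE hpq) subr0 Sq1 !andbF.
by move=> x y _ _; rewrite edge_sym.
Qed.

Lemma orb_same p q (p' q' : 'rV[F]_2) : cross p q != 0 -> cross p' q' != 0 -> line p' = line p ->
  Sq (cross p' q') = Sq (cross p q) -> Gamma p' q' = Gamma p q.
Proof.
move=> h h' e s; rewrite (rebase h h' e) Sq_div ?s ?eqxx //.
Qed.

Lemma exists_class u v : cross u v != 0 -> forall b, exists r : 'rV[F]_2 * 'rV[F]_2,
  cross r.1 r.2 != 0 /\ Sq (cross r.1 r.2) = b.
Proof.
move=> h b; case: (exists_NS h) => d /andP[d0 nd].
have hd : cross (d *: u) v != 0 by rewrite crossZl mulf_neq0.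
have sd : Sq (cross (d *: u) v) = ~~ Sq (cross u v).
  rewrite -!chi1E crossZl (chiM hq) (chiNS d0 nd).
  by case: (chi_pm h) => ->.
case: (boolP (Sq (cross u v) == b)) => [/eqP <-|nb]; first by exists (u, v).
exists (d *: u, v); split => //; rewrite sd.
by move: nb; case: b; case: (Sq _).
Qed.

Lemma part4a u v : cross u v != 0 -> #|[set orbitSL H | H in Gammas F]| = 2%N.
Proof.
move=> huv.
have E : [set orbitSL H | H in Gammas F] = [set Orb true; Orb false].
  apply/setP => X; apply/imsetP/set2P.
    case=> H /imsetP[r]; rewrite inE is_basisE => hr -> ->; rewrite orbit_eq //.
    by case: (Sq _); [left|right].
  move=> hX; have [b eb] : exists b, X = Orb b by case: hX => ->; [exists true|exists false].
  case: (exists_class huv b) => r [hr sr].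
  exists (Gamma r.1 r.2); first by apply/imsetP; exists r; rewrite ?inE ?is_basisE.
  by rewrite orbit_eq // sr.
rewrite E cards2.
suff -> : Orb true != Orb false by [].
apply/eqP => eO.
case: (exists_class huv true) => r [hr sr].
have : Gamma r.1 r.2 \in Orb true by apply/imsetP; exists r; rewrite // inE hr sr.
rewrite eO => /imsetP[r' ]; rewrite inE => /andP[hr' /eqP sr'] eG.
have el : line r'.1 = line r.1.
  case: (eqVneq (line r'.1) (line r.1)) => // ne; exfalso.
  have : line r'.1 \in V r.1 by rewrite !inE ne (Pu hr').
  by move: (congr1 fst eG) => /= ->; rewrite !inE eqxx.
move: eG; rewrite (rebase hr hr' el) Sq_div // sr sr' /=.
exact: Gamma_ne_compl.
Qed.

Lemma loc_at_u u v : cross u v != 0 ->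
  induced (loc (Ghat u v) (line u)) (projline F :\ line u) = Gamma u v.
Proof.
move=> huv; rewrite loc_mk induced_mk /=; last exact: subD1set.
rewrite GammaE; apply: mk_eq => i j hi hj ne.
have E : forall x y, edge (Ghat u v) x y = edge (Gamma u v) x y by [].
rewrite /eps !E !(edgeG huv) notVp /= hi hj ne /=.
by case: (gadj u v i j).
Qed.

Lemma Lz u v z : cross u v != 0 -> z \in projline F -> exists r : 'rV[F]_2 * 'rV[F]_2,
  [/\ cross r.1 r.2 != 0, line r.1 = z, Sq (cross r.1 r.2) = Sq (cross u v) &
      induced (loc (Ghat u v) z) (projline F :\ z) = Gamma r.1 r.2].
Proof.
move=> huv hz; have [ez|nz] := eqVneq z (line u).
  by exists (u, v); split => //; rewrite ez loc_at_u.
have : z \in V u by rewrite !inE nz hz.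
case/(P2 huv) => a ez.
set v' := a *: u + v.
have h' : cross u v' != 0 by rewrite crossDaZ.
have eG : Gamma u v' = Gamma u v by rewrite (orb_same huv h') // crossDaZ.
have eGh : Ghat u v = Ghat u v' by rewrite /Ghat eG.
exists (v', u); split => //=.
- by rewrite crossC oppr_eq0.
- by rewrite crossC SqN crossDaZ.
by rewrite eGh ez; case: (part2 h').
Qed.

Lemma part4b u v : cross u v != 0 ->
  orbitSL (Gamma u v) = [set induced (loc (Ghat u v) z) (projline F :\ z) | z in projline F].
Proof.
move=> huv; rewrite orbit_eq //; apply/setP => H; apply/imsetP/imsetP.
  case=> r; rewrite inE => /andP[hr /eqP sr] ->.
  case: (Lz huv (Pu hr)) => r' [hr' el sr' eL].
  exists (line r.1); first exact: (Pu hr).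
  by rewrite eL (orb_same hr' hr) // sr sr'.
case=> z hz ->; case: (Lz huv hz) => r [hr el sr ->].
by exists r; rewrite // inE hr sr eqxx.
Qed.

End Main.

Theorem theorem4 (t : nat) (F : finFieldType) (hq : #|F| = (4 * t + 5)%N)
    (u v : 'rV[F]_2) (huv : is_basis u v) :
  let s := t.+1 in
  let G := Gamma u v in
  [/\
   (* 1 *)
   [/\ diameter G 2,
       (forall x, x \in G.1 ->
          #|nbr G x| = (#|F|.-1)./2 /\ #|nbr G x| = (2 * s)%N),
       (forall x y, x \in G.1 -> y \in G.1 -> edge G x y ->
          #|nbr G x :&: nbr G y| = t) &
       (forall x y, x \in G.1 -> y \in G.1 -> is_dist G x y 2 ->
          #|nbr G x :&: nbr G y| = s)],
   (* 2 *)
   isolated (loc (Ghat u v) (line v)) (line v) /\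
   induced (loc (Ghat u v) (line v)) (projline F :\ line v) = Gamma v u,
   (* 3a *)
   (forall A : 'M[F]_2, A \in unitmx -> gimage A G = Gamma (u *m A) (v *m A)),
   (* 3b *)
   (forall A : 'M[F]_2, A \in unitmx -> actA A (line u) = line u ->
      Gamma (u *m A) (v *m A) =
        if [exists g : F, \det A == g ^+ 2] then G else complement G) &
   (* 4 *)
   #|[set orbitSL H | H in Gammas F]| = 2%N /\
   orbitSL G = [set induced (loc (Ghat u v) z) (projline F :\ z) | z in projline F]].
Proof.
move=> s G.
have huv' : cross u v != 0 by rewrite -is_basisE.
rewrite /s /G; split.
- exact: (part1 hq huv').
- exact: (part2 hq huv').
- move=> A uA; exact: (part3a huv').
- move=> A uA e; exact: (part3b hq huv').
- by split; [apply: (part4a hq huv') | apply: (part4b hq huv')].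
Qed.
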